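(* Let $n\ge2$ and let $U^+$ be the subalgebra of $U_{r,s}(\mathfrak{so}_{2n+1})$ generated by $e_1,\dots,e_n$, with root vectors as in the context. Then in $U^+$: (1) $e_i\mathcal E_{i,j}=s^2\mathcal E_{i,j}e_i$ for $1\le i<j\le n$; (2) $e_i\mathcal E_{i,j'}=s^2\mathcal E_{i,j'}e_i$ for $i+1<j\le n$; (3) $\mathcal E_{i,j}e_j=s^2e_j\mathcal E_{i,j}$ for $1\le i<j<n$; (4) $\mathcal E_{i,n'}e_n=s^2e_n\mathcal E_{i,n'}$ for $1\le i<n$; (5) $\mathcal E_{i,j'}e_j=r^{-2}e_j\mathcal E_{i,j'}$ for $1\le i<j<n$.
   Context: Let $r,s\in\mathbb C^*$ with $r^3\ne s^3$, $r^4\ne s^4$, $\mathbb K=\mathbb Q(r,s)$. $U_{r,s}(\mathfrak{so}_{2n+1})$ is the $\mathbb K$-algebra generated by $e_i,f_i,\omega_i^{\pm1},\omega_i'^{\pm1}$ ($1\le i\le n$) with: $\omega$'s commute, invertible; $\omega_je_i\omega_j^{-1}=\langle\omega_i',\omega_j\rangle e_i$, $\omega_jf_i\omega_j^{-1}=\langle\omega_i',\omega_j\rangle^{-1}f_i$, $\omega_j'e_i\omega_j'^{-1}=\langle\omega_j',\omega_i\rangle^{-1}e_i$, $\omega_j'f_i\omega_j'^{-1}=\langle\omega_j',\omega_i\rangle f_i$, where $\langle\omega_i',\omega_i\rangle=r^2s^{-2}$ ($i<n$), $\langle\omega_n',\omega_n\rangle=rs^{-1}$, $\langle\omega_i',\omega_{i+1}\rangle=r^{-2}$,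 $\langle\omega_{i+1}',\omega_i\rangle=s^2$ ($i<n$), others $1$; $e_if_j-f_je_i=\delta_{ij}(\omega_i-\omega_i')/(r_i-s_i)$ ($r_i=r^2,s_i=s^2$ for $i<n$; $r_n=r,s_n=s$); Serre relations $(\mathrm{ad}_le_i)^{1-a_{ij}}(e_j)=0=(\mathrm{ad}_rf_i)^{1-a_{ij}}(f_j)$, $i\ne j$, with $(a_{ij})$ the $B_n$ Cartan matrix ($a_{ii}=2$, $a_{i,i+1}=a_{i+1,i}=-1$ for $i\le n-2$, $a_{n-1,n}=-1$, $a_{n,n-1}=-2$, else $0$), $\mathrm{ad}_l(a)(b)=\sum a_{(1)}bS(a_{(2)})$, $\mathrm{ad}_r(a)(b)=\sum S(a_{(1)})ba_{(2)}$, for the Hopf structure $\Delta(\omega)=\omega\otimes\omega$, $\Delta(e_i)=e_i\otimes1+\omega_i\otimes e_i$, $\Delta(f_i)=1\otimes f_i+f_i\otimes\omega_i'$, $S(e_i)=-\omega_i^{-1}e_i$, $S(f_i)=-f_i\omega_i'^{-1}$. Root vectors: $\mathcal E_{i,i}=e_i$, $\mathcal E_{i,j}=e_i\mathcal E_{i+1,j}-r^2\mathcal E_{i+1,j}e_i$ ($1\le i<j\le n$), $\mathcal E_{i,n'}=\mathcal E_{i,n}e_n-rs\,e_n\mathcal E_{i,n}$ ($i\le n-1$), $\mathcal E_{i,j'}=\mathcal E_{i,(j+1)'}e_j-s^{-2}e_j\mathcal E_{i,(j+1)'}$ ($1\le i<j\le n-1$). *)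

(* Defs.v *)
From HB Require Import structures.
From mathcomp Require Import all_boot all_order all_algebra.
Set Implicit Arguments. Unset Strict Implicit. Unset Printing Implicit Defensive.
Import Order.TTheory GRing.Theory Num.Theory.
Local Open Scope ring_scope.

(* Generators are indexed by natural numbers; only indices 1..n are used. *)

Section Urs.
Variables (K : fieldType) (A : algType K) (r s : K) (n : nat).

(* <omega_i', omega_j> for 1 <= i, j <= n *)
Definition pairing (i j : nat) : K :=
  if i == j then (if (i < n)%N then r ^+ 2 / s ^+ 2 else r / s)
  else if (j == i.+1) && (i < n)%N then r ^- 2
  else if (i == j.+1) && (j < n)%N then s ^+ 2
  else 1.

Definition ri (i : nat) : K := if (i < n)%N then r ^+ 2 else r.
Definition si (i : nat) : K := if (i < n)%N then s ^+ 2 else s.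

(* 1 - a_{ij} for i <> j, (a_{ij}) the Cartan matrix of type B_n *)
Definition serre_exp (i j : nat) : nat :=
  if j == i.+1 then 2
  else if i == j.+1 then (if i == n then 3 else 2)
  else 1.

(* ad_l(e_i)(b) = e_i b S(1) + omega_i b S(e_i) = e_i b - omega_i b omega_i^{-1} e_i *)
Definition adl (ei wi wiinv : A) (b : A) : A := ei * b - wi * b * wiinv * ei.
(* ad_r(f_i)(b) = S(1) b f_i + S(f_i) b omega_i' = b f_i - f_i omega_i'^{-1} b omega_i' *)
Definition adr (fi w'i w'iinv : A) (b : A) : A := b * fi - fi * w'iinv * b * w'i.

Definition Urs_relations (e f w winv w' w'inv : nat -> A) : Prop :=
  [/\ (forall i, (1 <= i <= n)%N ->
         [/\ w i * winv i = 1, winv i * w i = 1,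
             w' i * w'inv i = 1 & w'inv i * w' i = 1]),
      (forall i j, (1 <= i <= n)%N -> (1 <= j <= n)%N ->
         [/\ w i * w j = w j * w i, w' i * w' j = w' j * w' i
           & w i * w' j = w' j * w i]),
      (forall i j, (1 <= i <= n)%N -> (1 <= j <= n)%N ->
         [/\ w j * e i * winv j = pairing i j *: e i,
             w j * f i * winv j = (pairing i j)^-1 *: f i,
             w' j * e i * w'inv j = (pairing j i)^-1 *: e i
           & w' j * f i * w'inv j = pairing j i *: f i]),
      (forall i j, (1 <= i <= n)%N -> (1 <= j <= n)%N ->
         e i * f j - f j * e i =
           if i == j then (ri i - si i)^-1 *: (w i - w' i) else 0)
    & (forall i j, (1 <= i <= n)%N -> (1 <= j <= n)%N -> i != j ->
         iter (serre_exp i j) (adl (e i) (w i) (winv i)) (e j) = 0 /\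
         iter (serre_exp i j) (adr (f i) (w' i) (w'inv i)) (f j) = 0)].

Variable e : nat -> A.

(* Ev k i = E_{i,i+k} *)
Fixpoint Ev (k i : nat) : A :=
  match k with
  | 0 => e i
  | k'.+1 => e i * Ev k' i.+1 - r ^+ 2 *: (Ev k' i.+1 * e i)
  end.

Definition Eij (i j : nat) : A := Ev (j - i) i.

(* Epv k i = E_{i,(n-k)'} *)
Fixpoint Epv (k i : nat) : A :=
  match k with
  | 0 => Eij i n * e n - (r * s) *: (e n * Eij i n)
  | k'.+1 => Epv k' i * e (n - k) - s ^- 2 *: (e (n - k) * Epv k' i)
  end.

Definition Eijp (i j : nat) : A := Epv (n - j) i.

End Urs.

(* Main.v *)
Require Import Defs.
From HB Require Import structures.
From mathcomp Require Import all_boot all_order all_algebra.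
From mathcomp Require Import ring zify.
Set Implicit Arguments. Unset Strict Implicit. Unset Printing Implicit Defensive.
Import Order.TTheory GRing.Theory Num.Theory.
Local Open Scope ring_scope.

Ltac rng := apply/andP; split; lia.
Ltac nen := apply/eqP; lia.
Ltac nfalse := apply/negbTE/eqP; lia.
Ltac fld := field; rewrite ?oner_eq0 /= ?andbT; try (repeat (apply/andP; split); assumption).

Section Gen.
Variables (K : fieldType) (A : algType K).
Implicit Types (u v w x y X Y Z P Q : A) (c d k : K).

Lemma zm1 (V : zmodType) (p q r t : V) : (p - q) - (r - t) = (p - r) - (q - t).
Proof. by rewrite !opprB addrACA [RHS]addrACA [- q + _]addrC. Qed.

Definition qc (X Y : A) (c : K) : A := X * Y - c *: (Y * X).

Lemma qcB1 X Y Z c k : qc (X - k *: Y) Z c = qc X Z c - k *: qc Y Z c.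
Proof.
rewrite /qc mulrBl mulrBr -scalerAl -scalerAr !scalerBr !scalerA mulrC.
exact: zm1.
Qed.

Lemma qcB2 X Y Z c k : qc Z (X - k *: Y) c = qc Z X c - k *: qc Z Y c.
Proof.
rewrite /qc mulrBl mulrBr -scalerAl -scalerAr !scalerBr !scalerA mulrC.
exact: zm1.
Qed.


Lemma zm2 (V : zmodType) (p q r t : V) : p - q - (r - t) = p - (q + r) + t.
Proof. by rewrite opprB opprD !addrA [RHS]addrAC. Qed.

Lemma zm3 (V : zmodType) (p q t : V) : p - q + t = t - q + p.
Proof. by rewrite addrC addrA [RHS]addrAC. Qed.

Lemma qcMl1 X Y y c : Y * y = y * Y -> qc (Y * X) y c = Y * qc X y c.
Proof. by move=> h; rewrite /qc mulrBr -scalerAr !mulrA -h. Qed.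

Lemma qcMr1 X Y y c : X * y = y * X -> qc (Y * X) y c = qc Y y c * X.
Proof. by move=> h; rewrite /qc mulrBl -scalerAl -!mulrA h. Qed.

Lemma qcMl2 X Y u c : u * X = X * u -> qc u (X * Y) c = X * qc u Y c.
Proof. by move=> h; rewrite /qc mulrBr -scalerAr !mulrA h. Qed.

Lemma qcMr2 X Y u c : u * X = X * u -> qc u (Y * X) c = qc u Y c * X.
Proof. by move=> h; rewrite /qc mulrBl -scalerAl -!mulrA h. Qed.

Lemma qc0l X c : qc 0 X c = 0.
Proof. by rewrite /qc mul0r mulr0 scaler0 subr0. Qed.

Lemma qc0r X c : qc X 0 c = 0.
Proof. by rewrite /qc mul0r mulr0 scaler0 subr0. Qed.

Lemma jac u w Y a c : u * w = w * u -> qc (qc u Y a) w c = qc u (qc Y w c) a.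
Proof.
move=> h; have -> : qc u Y a = u * Y - a *: (Y * u) by [].
by rewrite qcB1 qcMl1 // qcMr1.
Qed.

Lemma comm_qc u X Y c : u * X = X * u -> u * Y = Y * u ->
  u * qc X Y c = qc X Y c * u.
Proof.
move=> hX hY; rewrite /qc mulrBr mulrBl -scalerAr -scalerAl.
by rewrite !mulrA hX -(mulrA X u Y) hY mulrA -(mulrA Y u X) hX mulrA. Qed.

Lemma Q2E u v c d :
  qc u (qc u v c) d = u * u * v - (c + d) *: (u * v * u) + (c * d) *: (v * u * u).
Proof.
rewrite /qc mulrBr mulrBl -scalerAr -scalerAl !mulrA scalerBr scalerA zm2.
by rewrite scalerDl mulrC.
Qed.

Lemma R2E X y c d :
  qc (qc X y c) y d = X * y * y - (c + d) *: (y * X * y) + (c * d) *: (y * y * X).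
Proof.
rewrite /qc mulrBr mulrBl -scalerAr -scalerAl !mulrA scalerBr scalerA zm2.
by rewrite scalerDl mulrC.
Qed.

Lemma qc_sym u v c d : qc u (qc u v c) d = qc u (qc u v d) c.
Proof. by rewrite !Q2E [d + c]addrC [d * c]mulrC. Qed.

Lemma E3 v y c d : c != 0 -> d != 0 ->
  qc (qc v y c) y d = (c * d) *: qc y (qc y v c^-1) d^-1.
Proof.
move=> hc hd; rewrite R2E Q2E scalerDr scalerBr !scalerA.
have -> : c * d * (c^-1 + d^-1) = c + d by fld.
have -> : c * d * (c^-1 * d^-1) = 1 by fld.
rewrite scale1r; exact: zm3.
Qed.

Lemma Q2qcl u X Y c d k : u * X = X * u ->
  qc u (qc u (qc Y X k) c) d = qc (qc u (qc u Y c) d) X k.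
Proof.
move=> h; have -> : qc Y X k = Y * X - k *: (X * Y) by [].
rewrite [qc u (_ - _) c]qcB2 [qc u (Y * X) c]qcMr2 // [qc u (X * Y) c]qcMl2 //.
rewrite [qc u (_ - _) d]qcB2 [qc u (_ * X) d]qcMr2 // [qc u (X * _) d]qcMl2 //.
Qed.

Lemma Q2qcr u X Y c d k : u * X = X * u ->
  qc u (qc u (qc X Y k) c) d = qc X (qc u (qc u Y c) d) k.
Proof.
move=> h; have -> : qc X Y k = X * Y - k *: (Y * X) by [].
rewrite [qc u (_ - _) c]qcB2 [qc u (Y * X) c]qcMr2 // [qc u (X * Y) c]qcMl2 //.
rewrite [qc u (_ - _) d]qcB2 [qc u (_ * X) d]qcMr2 // [qc u (X * _) d]qcMl2 //.
Qed.

Lemma R2qcl y H Y c d k : H * y = y * H ->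
  qc (qc (qc Y H k) y c) y d = qc (qc (qc Y y c) y d) H k.
Proof.
move=> h; have -> : qc Y H k = Y * H - k *: (H * Y) by [].
rewrite [qc (_ - _) y c]qcB1 [qc (Y * H) y c]qcMr1 // [qc (H * Y) y c]qcMl1 //.
rewrite [qc (_ - _) y d]qcB1 [qc (_ * H) y d]qcMr1 // [qc (H * _) y d]qcMl1 //.
Qed.

Lemma R2qcr y H Y c d k : H * y = y * H ->
  qc (qc (qc H Y k) y c) y d = qc H (qc (qc Y y c) y d) k.
Proof.
move=> h; have -> : qc H Y k = H * Y - k *: (Y * H) by [].
rewrite [qc (_ - _) y c]qcB1 [qc (Y * H) y c]qcMr1 // [qc (H * Y) y c]qcMl1 //.
rewrite [qc (_ - _) y d]qcB1 [qc (_ * H) y d]qcMr1 // [qc (H * _) y d]qcMl1 //.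
Qed.

Lemma qc_eq0 X Y c : (qc X Y c = 0) <-> (X * Y = c *: (Y * X)).
Proof. by rewrite /qc; split => [/eqP|->]; [rewrite subr_eq0 => /eqP|rewrite subrr]. Qed.


Lemma zm4 (V : zmodType) (p q r t : V) : (p + q) - (r + t) = (q - t) + (p - r).
Proof. by rewrite opprD addrACA addrC. Qed.

Lemma zm5 (V : zmodType) (p q k : V) : (p + k) - (q + k) = p - q.
Proof. by rewrite opprD addrACA subrr addr0. Qed.

Lemma Fcomm x y G a b : b != 0 -> a + b != 0 -> x * G = G * x ->
  qc y (qc y G a) b = 0 -> qc (qc x y a) y b = 0 ->
  y * qc x (qc y G a) a = qc x (qc y G a) a * y.
Proof.
move=> hb hab hxG h1 h2.
set E := qc y G a; set E12 := qc x y a; set F := qc x E a.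
have hF : F = qc E12 G a by rewrite /F /E12 jac.
have hEy : E * y = b^-1 *: (y * E).
  by move/qc_eq0: h1 => ->; rewrite scalerA mulVf // scale1r.
have hyE12 : y * E12 = b^-1 *: (E12 * y).
  by move/qc_eq0: h2 => ->; rewrite scalerA mulVf // scale1r.
have hxy : x * y = E12 + a *: (y * x) by rewrite /E12 /qc subrK.
have hyG : y * G = E + a *: (G * y) by rewrite /E /qc subrK.
have hFd : F = qc x E a by [].
clearbody F E E12.
set K' := b^-1 *: (E12 * E) - a *: (E * E12).
have D1 : F * y = (a / b) *: (y * F) + K'.
  rewrite hFd /qc mulrBl -scalerAl -!mulrA hEy -scalerAr (mulrA x y E) hxy.
  rewrite mulrDl [E * (_ + _)]mulrDr -scalerAl -scalerAr (mulrA E y x) hEy -scalerAl.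
  rewrite mulrBr -scalerAr !mulrA /K'.
  rewrite !scalerDr !scalerN !scalerA.
  have -> : b^-1 * a = a / b by rewrite mulrC.
  have -> : a * a / b = a / b * a by rewrite mulrAC.
  exact: zm4.
have D2 : y * F = (a / b) *: (F * y) + K'.
  rewrite {1}hF /qc mulrBr -scalerAr !mulrA hyE12 -scalerAl -(mulrA E12 y G) hyG.
  rewrite mulrDr mulrDl -scalerAr -scalerAl -(mulrA G y E12) hyE12 -scalerAr !mulrA.
  rewrite hF /qc mulrBl -scalerAl ?mulrA /K'.
  rewrite !scalerDr !scalerN !scalerA.
  have -> : b^-1 * a = a / b by rewrite mulrC.
  have -> : a * a / b = a / b * a by rewrite mulrAC.
  exact: zm4.
have h3 : F * y - y * F = ((a / b) *: (y * F) + K') - ((a / b) *: (F * y) + K').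
  by rewrite -D1 -D2.
have h4 : F * y - y * F = (a / b) *: (y * F - F * y) by rewrite h3 zm5 scalerBr.
have h5 : (1 + a / b) *: (F * y - y * F) = 0.
  by rewrite scalerDl scale1r {1}h4 -scalerDr -[y * F - F * y]opprB addNr scaler0.
have h6 : 1 + a / b != 0.
  have -> : 1 + a / b = (a + b) / b by fld.
  by rewrite mulf_neq0 // invr_neq0.
move/eqP: h5; rewrite scaler_eq0 (negbTE h6) /= subr_eq0 => /eqP ->.
by [].
Qed.


Lemma conj_mul W Wi P Q : Wi * W = 1 -> W * (P * Q) * Wi = (W * P * Wi) * (W * Q * Wi).
Proof. by move=> h; rewrite !mulrA -(mulrA (W * P) Wi W) h mulr1. Qed.

Lemma conj_qc W Wi P Q p q c : Wi * W = 1 -> W * P * Wi = p *: P -> W * Q * Wi = q *: Q ->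
  W * qc P Q c * Wi = (p * q) *: qc P Q c.
Proof.
move=> h hP hQ; rewrite /qc mulrBr mulrBl -scalerAr -scalerAl !conj_mul // hP hQ.
rewrite -!scalerAl -!scalerAr !scalerA scalerBr scalerA.
by have -> : c * q * p = p * q * c by ring.
Qed.

Lemma adl_conj u W Wi X c : W * X * Wi = c *: X -> adl u W Wi X = qc u X c.
Proof. by move=> h; rewrite /adl h -scalerAl. Qed.

Lemma qc_swap X Y c : c != 0 -> qc Y X c = - c *: qc X Y c^-1.
Proof.
move=> hc; by rewrite /qc scalerBr scalerA mulNr mulfV // scaleN1r opprK scaleNr addrC. Qed.

Lemma qcZ2 X Y c k : qc X (k *: Y) c = k *: qc X Y c.
Proof. by rewrite /qc -scalerAr -scalerAl scalerBr !scalerA [c * k]mulrC. Qed.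

Lemma qcZ1 X Y c k : qc (k *: X) Y c = k *: qc X Y c.
Proof. by rewrite /qc -scalerAr -scalerAl scalerBr !scalerA [c * k]mulrC. Qed.

Lemma swap3 x z c1 c2 c3 : c1 != 0 -> c2 != 0 -> c3 != 0 ->
  qc z (qc z (qc z x c1) c2) c3 =
  (- (c1 * c2 * c3)) *: qc (qc (qc x z c1^-1) z c2^-1) z c3^-1.
Proof.
move=> h1 h2 h3.
have e1 : qc z x c1 = - c1 *: qc x z c1^-1 by apply: qc_swap.
rewrite e1 qcZ2.
have e2 : qc z (qc x z c1^-1) c2 = - c2 *: qc (qc x z c1^-1) z c2^-1 by apply: qc_swap.
rewrite e2 !qcZ2.
have e3 : qc z (qc (qc x z c1^-1) z c2^-1) c3 =
  - c3 *: qc (qc (qc x z c1^-1) z c2^-1) z c3^-1 by apply: qc_swap.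
rewrite e3 !scalerA.
by have -> : - c1 * - c2 * - c3 = - (c1 * c2 * c3) by ring. Qed.

End Gen.

Section Conc.
Variables (K : fieldType) (A : algType K) (r s : K) (n : nat) (e : nat -> A).
Let a := r ^+ 2.
Let b := s ^+ 2.
Hypothesis hr : r != 0.
Hypothesis hs : s != 0.
Hypothesis hab : a + b != 0.
Hypothesis hcomm : forall i j, (1 <= i)%N -> (i.+2 <= j)%N -> (j <= n)%N -> e i * e j = e j * e i.
Hypothesis hSA : forall i, (1 <= i)%N -> (i < n)%N -> qc (e i) (qc (e i) (e i.+1) b) a = 0.
Hypothesis hSB : forall i, (1 <= i)%N -> (i.+2 <= n)%N -> qc (qc (e i) (e i.+1) a) (e i.+1) b = 0.
Hypothesis hS3 : qc (Epv r s n e 0 n.-1) (e n) b = 0.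

Lemma hb : b != 0. Proof. by rewrite /b expf_neq0. Qed.
Lemma ha : a != 0. Proof. by rewrite /a expf_neq0. Qed.

Lemma EvS k m : Ev r e k.+1 m = qc (e m) (Ev r e k m.+1) a.
Proof. by []. Qed.

Lemma EpvS k i : Epv r s n e k.+1 i = qc (Epv r s n e k i) (e (n - k.+1)) (s ^- 2).
Proof. by []. Qed.

Lemma Epv0 i : Epv r s n e 0 i = qc (Ev r e (n - i) i) (e n) (r * s).
Proof. by []. Qed.

Lemma C1 k m i : (1 <= i)%N -> (i.+2 <= m)%N -> (m + k <= n)%N ->
  e i * Ev r e k m = Ev r e k m * e i.
Proof.
elim: k m => [|k IH] m hi hm hmk /=.
  by apply: hcomm => //; lia.
apply: comm_qc; first by apply: hcomm => //; lia.
by apply: IH => //; lia.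
Qed.

Lemma SfEv k i : (1 <= i)%N -> (i.+1 + k <= n)%N ->
  qc (e i) (qc (e i) (Ev r e k i.+1) b) a = 0.
Proof.
case: k => [|k] hi hk.
  by apply: hSA => //; lia.
rewrite EvS Q2qcl; first by rewrite hSA ?qc0l //; lia.
by apply: C1 => //; lia.
Qed.

Lemma P1 i j : (1 <= i)%N -> (i < j <= n)%N -> qc (e i) (Ev r e (j - i) i) b = 0.
Proof.
move=> hi /andP [hij hjn].
have -> : (j - i = (j - i.+1).+1)%N by lia.
by rewrite EvS qc_sym SfEv //; lia.
Qed.

Lemma EpvJ k i : (1 <= i)%N -> (i.+2 + k <= n)%N ->
  Epv r s n e k i = qc (e i) (Epv r s n e k i.+1) a.
Proof.
elim: k => [|k IH] hi hk.
  rewrite !Epv0.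
  have -> : (n - i = (n - i.+1).+1)%N by lia.
  by rewrite EvS jac //; apply: hcomm => //; lia.
rewrite !EpvS IH //; last by lia.
by rewrite jac //; apply: hcomm => //; lia.
Qed.

Lemma SfEpv k i : (1 <= i)%N -> (i.+2 + k <= n)%N ->
  qc (e i) (qc (e i) (Epv r s n e k i.+1) b) a = 0.
Proof.
elim: k => [|k IH] hi hk.
  rewrite Epv0 Q2qcl; last by apply: hcomm => //; lia.
  by rewrite SfEv ?qc0l //; lia.
rewrite EpvS Q2qcl; last by apply: hcomm => //; lia.
by rewrite IH ?qc0l //; lia.
Qed.

Lemma P2 i j : (1 <= i)%N -> (i.+1 < j <= n)%N ->
  qc (e i) (Epv r s n e (n - j) i) b = 0.
Proof.
move=> hi /andP [hij hjn].
rewrite EpvJ; [rewrite qc_sym SfEpv //; lia | done | lia].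
Qed.

Lemma P3 i j : (1 <= i)%N -> (i < j < n)%N -> qc (Ev r e (j - i) i) (e j) b = 0.
Proof.
move=> hi /andP [hij hjn].
have [d hd] : exists d, j = (i + d.+1)%N by exists (j - i.+1)%N; lia.
subst j.
elim: d i hi hij hjn => [|d IH] i hi hij hjn.
  have -> : (i + 1 - i = 1)%N by lia.
  by rewrite EvS addn1 hSB //; lia.
have -> : (i + d.+2 - i = d.+2)%N by lia.
rewrite EvS jac; last by apply: hcomm => //; lia.
have := IH i.+1; have -> : (i.+1 + d.+1 - i.+1 = d.+1)%N by lia.
rewrite addSnnS => -> //; try lia.
by rewrite qc0r.
Qed.


Lemma P4 i : (1 <= i < n)%N -> qc (Epv r s n e 0 i) (e n) b = 0.
Proof.
move=> /andP [hi hin].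
have [d hd] : exists d, n = (i + d.+1)%N by exists (n - i.+1)%N; lia.
elim: d i hi hin hd => [|d IH] i hi hin hd.
  by have -> : i = n.-1 by lia.
rewrite EpvJ; [|done|lia].
rewrite jac; last by apply: hcomm => //; lia.
by rewrite IH ?qc0r //; lia.
Qed.

Lemma Fconc i : (1 <= i)%N -> (i.+2 <= n)%N ->
  e i.+1 * Ev r e (n - i) i = Ev r e (n - i) i * e i.+1.
Proof.
move=> hi hin.
have -> : (n - i = (n - i.+2).+2)%N by lia.
rewrite EvS EvS; apply: Fcomm.
- exact: hb.
- exact: hab.
- by apply: C1 => //; lia.
- have h : qc (e i.+1) (Ev r e (n - i.+1) i.+1) b = 0.
    by apply: P1 => //; apply/andP; split; lia.
  move: h; have -> : (n - i.+1 = (n - i.+2).+1)%N by lia.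
  by rewrite EvS.
- by apply: hSB.
Qed.

Lemma Hcomm i k : (1 <= i)%N -> (i.+3 + k <= n)%N ->
  e i.+1 * Epv r s n e k i = Epv r s n e k i * e i.+1.
Proof.
elim: k => [|k IH] hi hk.
  rewrite Epv0; apply: comm_qc; first by apply: Fconc => //; lia.
  by apply: hcomm => //; lia.
rewrite EpvS; apply: comm_qc; first by apply: IH => //; lia.
by apply: hcomm => //; lia.
Qed.

Lemma Tv i : (1 <= i)%N -> (i.+2 <= n)%N ->
  qc (qc (e i.+2) (e i.+1) (s ^- 2)) (e i.+1) (r ^- 2) = 0.
Proof.
move=> hi hin.
rewrite E3 ?invr_neq0 ?expf_neq0 // !invrK hSA ?scaler0 //; lia.
Qed.

Lemma B5 i : (1 <= i)%N -> (i.+2 <= n)%N ->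
  qc (Epv r s n e (n - i.+1) i) (e i.+1) (r ^- 2) = 0.
Proof.
move=> hi hin.
have -> : (n - i.+1 = (n - i.+2).+1)%N by lia.
rewrite EpvS.
have -> : (n - (n - i.+2).+1 = i.+1)%N by lia.
case hk: (n - i.+2)%N => [|k].
  rewrite Epv0 R2qcr; last by rewrite Fconc.
  have -> : e n = e i.+2 by congr e; lia.
  by rewrite Tv ?qc0r.
rewrite EpvS R2qcr; last by rewrite Hcomm //; lia.
have -> : (n - k.+1 = i.+2)%N by lia.
by rewrite Tv ?qc0r //.
Qed.

Lemma P5 i j : (1 <= i)%N -> (i < j < n)%N -> qc (Epv r s n e (n - j) i) (e j) (r ^- 2) = 0.
Proof.
move=> hi /andP [hij hjn].
have [d hd] : exists d, j = (i + d.+1)%N by exists (j - i.+1)%N; lia.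
elim: d i hi hij hd => [|d IH] i hi hij hd.
  have hj : j = i.+1 by lia.
  by rewrite hj B5 //; lia.
rewrite EpvJ; [|done|lia].
rewrite jac; last by apply: hcomm => //; lia.
by rewrite IH ?qc0r //; lia.
Qed.

Lemma all5 :
  [/\ (forall i j, (1 <= i)%N -> (i < j <= n)%N ->
         e i * Eij r e i j = s ^+ 2 *: (Eij r e i j * e i)),
      (forall i j, (1 <= i)%N -> (i.+1 < j <= n)%N ->
         e i * Eijp r s n e i j = s ^+ 2 *: (Eijp r s n e i j * e i)),
      (forall i j, (1 <= i)%N -> (i < j < n)%N ->
         Eij r e i j * e j = s ^+ 2 *: (e j * Eij r e i j)),
      (forall i, (1 <= i < n)%N ->
         Eijp r s n e i n * e n = s ^+ 2 *: (e n * Eijp r s n e i n))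
    & (forall i j, (1 <= i)%N -> (i < j < n)%N ->
         Eijp r s n e i j * e j = r ^- 2 *: (e j * Eijp r s n e i j))].
Proof.
split.
- by move=> i j hi hj; apply/qc_eq0; apply: P1.
- by move=> i j hi hj; apply/qc_eq0; apply: P2.
- by move=> i j hi hj; apply/qc_eq0; apply: P3.
- by move=> i hi; apply/qc_eq0; rewrite /Eijp subnn; apply: P4.
- by move=> i j hi hj; apply/qc_eq0; apply: P5.
Qed.

End Conc.

Section Pair.
Variables (K : fieldType) (r s : K) (n : nat).

Lemma pair_ii i : (i < n)%N -> pairing r s n i i = r ^+ 2 / s ^+ 2.
Proof. by move=> h; rewrite /pairing eqxx h. Qed.

Lemma pair_nn : pairing r s n n n = r / s.
Proof. by rewrite /pairing eqxx ltnn. Qed.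

Lemma pair_up i : (i < n)%N -> pairing r s n i i.+1 = r ^- 2.
Proof.
move=> h; rewrite /pairing (_ : (i == i.+1) = false); last by nfalse.
by rewrite eqxx h.
Qed.

Lemma pair_down i : (i < n)%N -> pairing r s n i.+1 i = s ^+ 2.
Proof.
move=> h; rewrite /pairing (_ : (i.+1 == i) = false); last by nfalse.
rewrite (_ : (i == i.+2) = false) /=; last by nfalse.
by rewrite eqxx h.
Qed.

Lemma pair_far i j : (i.+2 <= j)%N -> pairing r s n j i = 1.
Proof.
move=> h; rewrite /pairing (_ : (j == i) = false); last by nfalse.
rewrite (_ : (i == j.+1) = false) /=; last by nfalse.
by rewrite (_ : (j == i.+1) = false) /=; last by nfalse.
Qed.

Lemma serre_far i j : (i.+2 <= j)%N -> serre_exp n i j = 1%N.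
Proof.
move=> h; rewrite /serre_exp (_ : (j == i.+1) = false); last by nfalse.
by rewrite (_ : (i == j.+1) = false) /=; last by nfalse.
Qed.

Lemma serre_up i : serre_exp n i i.+1 = 2%N.
Proof. by rewrite /serre_exp eqxx. Qed.

Lemma serre_down i : (i.+1 < n)%N -> serre_exp n i.+1 i = 2%N.
Proof.
move=> h; rewrite /serre_exp (_ : (i == i.+2) = false); last by nfalse.
by rewrite eqxx (_ : (i.+1 == n) = false); last by nfalse.
Qed.

Lemma serre_nn : (1 <= n)%N -> serre_exp n n n.-1 = 3%N.
Proof.
move=> h; rewrite /serre_exp (_ : (n.-1 == n.+1) = false); last by nfalse.
by rewrite (_ : (n == n.-1.+1) = true) ?eqxx //; apply/eqP; lia.
Qed.

End Pair.

Lemma scale_cancel (K : fieldType) (A : algType K) (k : K) (v : A) :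
  k *: v = 0 -> k != 0 -> v = 0.
Proof. by move=> /eqP; rewrite scaler_eq0 => /orP [/eqP -> /eqP|/eqP]. Qed.

Theorem lemma3p2 (K : fieldType) (A : algType K) (r s : K) (n : nat)
    (e f w winv w' w'inv : nat -> A) :
  r != 0 -> s != 0 -> r ^+ 3 != s ^+ 3 -> r ^+ 4 != s ^+ 4 -> (2 <= n)%N ->
  Urs_relations r s n e f w winv w' w'inv ->
  [/\ (forall i j, (1 <= i)%N -> (i < j <= n)%N ->
         e i * Eij r e i j = s ^+ 2 *: (Eij r e i j * e i)),
      (forall i j, (1 <= i)%N -> (i.+1 < j <= n)%N ->
         e i * Eijp r s n e i j = s ^+ 2 *: (Eijp r s n e i j * e i)),
      (forall i j, (1 <= i)%N -> (i < j < n)%N ->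
         Eij r e i j * e j = s ^+ 2 *: (e j * Eij r e i j)),
      (forall i, (1 <= i < n)%N ->
         Eijp r s n e i n * e n = s ^+ 2 *: (e n * Eijp r s n e i n))
    & (forall i j, (1 <= i)%N -> (i < j < n)%N ->
         Eijp r s n e i j * e j = r ^- 2 *: (e j * Eijp r s n e i j))].
Proof.
move=> hr hs _ h4 hn hU.
have hs2 : s ^+ 2 != 0 by rewrite expf_neq0.
have hr2 : r ^+ 2 != 0 by rewrite expf_neq0.
have hab : r ^+ 2 + s ^+ 2 != 0.
  apply: contra h4 => h; apply/eqP.
  have hr2' : r ^+ 2 = - s ^+ 2 by apply/eqP; rewrite -addr_eq0.
  by rewrite (_ : 4%N = (2 * 2)%N) // !exprM hr2' sqrrN.
case: hU => hinv hcw hconj hef hser.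
have hcomm : forall i j, (1 <= i)%N -> (i.+2 <= j)%N -> (j <= n)%N -> e i * e j = e j * e i.
  move=> i j hi hij hjn.
  have [h1 _] := hser i j (ltac:(rng)) (ltac:(rng)) (ltac:(nen)).
  move: h1; rewrite serre_far // /=.
  have c1 : w i * e j * winv i = 1 *: e j.
    by case: (hconj j i (ltac:(rng)) (ltac:(rng))) => [-> _ _ _]; rewrite pair_far.
  by rewrite (adl_conj _ c1) => /qc_eq0; rewrite scale1r.
have hSA : forall i, (1 <= i)%N -> (i < n)%N ->
    qc (e i) (qc (e i) (e i.+1) (s ^+ 2)) (r ^+ 2) = 0.
  move=> i hi hin.
  have [h1 _] := hser i i.+1 (ltac:(rng)) (ltac:(rng)) (ltac:(nen)).
  move: h1; rewrite serre_up /=.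
  have c1 : w i * e i.+1 * winv i = s ^+ 2 *: e i.+1.
    by case: (hconj i.+1 i (ltac:(rng)) (ltac:(rng))) => [-> _ _ _]; rewrite pair_down.
  have c0 : w i * e i * winv i = (r ^+ 2 / s ^+ 2) *: e i.
    by case: (hconj i i (ltac:(rng)) (ltac:(rng))) => [-> _ _ _]; rewrite pair_ii.
  have hwi : winv i * w i = 1 by case: (hinv i (ltac:(rng))).
  rewrite (adl_conj _ c1) (adl_conj _ (conj_qc _ hwi c0 c1)).
  by have -> : r ^+ 2 / s ^+ 2 * s ^+ 2 = r ^+ 2 by fld.
have hSB : forall i, (1 <= i)%N -> (i.+2 <= n)%N ->
    qc (qc (e i) (e i.+1) (r ^+ 2)) (e i.+1) (s ^+ 2) = 0.
  move=> i hi hin.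
  have [h1 _] := hser i.+1 i (ltac:(rng)) (ltac:(rng)) (ltac:(nen)).
  move: h1; rewrite serre_down /=; last by lia.
  have c1 : w i.+1 * e i * winv i.+1 = r ^- 2 *: e i.
    by case: (hconj i i.+1 (ltac:(rng)) (ltac:(rng))) => [-> _ _ _]; rewrite pair_up //; lia.
  have c0 : w i.+1 * e i.+1 * winv i.+1 = (r ^+ 2 / s ^+ 2) *: e i.+1.
    by case: (hconj i.+1 i.+1 (ltac:(rng)) (ltac:(rng))) => [-> _ _ _]; rewrite pair_ii //; lia.
  have hwi : winv i.+1 * w i.+1 = 1 by case: (hinv i.+1 (ltac:(rng))).
  rewrite (adl_conj _ c1) (adl_conj _ (conj_qc _ hwi c0 c1)).
  have -> : r ^+ 2 / s ^+ 2 * r ^- 2 = (s ^+ 2)^-1 by fld.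
  by move=> h1; rewrite E3 // h1 scaler0.
have hS3 : qc (Epv r s n e 0 n.-1) (e n) (s ^+ 2) = 0.
  have hnn : n.-1.+1 = n by lia.
  have [h1 _] := hser n n.-1 (ltac:(rng)) (ltac:(rng)) (ltac:(nen)).
  rewrite serre_nn in h1; last by lia.
  simpl in h1; move: h1.
  have hp : pairing r s n n.-1 n = r ^- 2.
    by rewrite -[X in pairing _ _ _ _ X]hnn pair_up //; lia.
  have c1 : w n * e n.-1 * winv n = r ^- 2 *: e n.-1.
    by case: (hconj n.-1 n (ltac:(rng)) (ltac:(rng))) => [-> _ _ _]; rewrite hp.
  have c0 : w n * e n * winv n = (r / s) *: e n.
    by case: (hconj n n (ltac:(rng)) (ltac:(rng))) => [-> _ _ _]; rewrite pair_nn.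
  have hwi : winv n * w n = 1 by case: (hinv n (ltac:(rng))).
  rewrite (adl_conj _ c1) (adl_conj _ (conj_qc _ hwi c0 c1)).
  rewrite (adl_conj _ (conj_qc _ hwi c0 (conj_qc _ hwi c0 c1))).
  have hc1 : r ^- 2 != 0 by rewrite invr_neq0.
  have hc2 : r / s * r ^- 2 != 0 by rewrite !mulf_neq0 ?invr_neq0.
  have hc3 : r / s * (r / s * r ^- 2) != 0 by rewrite !mulf_neq0 ?invr_neq0.
  rewrite swap3 // => /scale_cancel h1.
  have {}h1 := h1 (ltac:(by rewrite oppr_eq0 (mulf_neq0 (mulf_neq0 hc1 hc2) hc3))).
  move: h1; rewrite invrK.
  have -> : (r / s * r ^- 2)^-1 = r * s by fld.
  have -> : (r / s * (r / s * r ^- 2))^-1 = s ^+ 2 by fld.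
  move=> h.
  have -> : Epv r s n e 0 n.-1 = qc (qc (e n.-1) (e n) (r ^+ 2)) (e n) (r * s).
    rewrite /Epv /Eij (_ : (n - n.-1 = 1)%N); last by lia.
    by rewrite /= hnn.
  exact: h.
exact: (all5 hr hs hab hcomm hSA hSB hS3).
Qed.
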